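(* Let $\beta\ge2$ and let $T\ge\beta$ be an even integer. For $b\in\{0,1\}$ let $\mathcal{L}^b$ be the LDS on $\mathbb{R}$ with dynamics $x_{t+1}=x_t-\frac\beta Tu_t+w_t^b$, initial state $x_1=1$, cost functions $c_t(x,u):=|x|+|u|$ if $t>T/2$ and $c_t(x,u):=0$ otherwise, perturbations $w_t^0:=0$ for all $t$, and $w_t^1:=-1$ if $t=T/2$, $w_t^1:=0$ otherwise. Let $\mathrm{Alg}$ be any randomized algorithm for online control and $b\in\{0,1\}$. Then the (random) trajectory $(x_t,u_t)_{t=1}^T$ produced by $\mathrm{Alg}$ in $\mathcal{L}^b$ satisfies, with probability $1$, $$\sum_{t=1}^Tc_t(x_t,u_t)=\sum_{t=T/2+1}^T(|x_t|+|u_t|)\ge\frac{T}{2\beta}|x_{T/2+1}|.$$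
   Context: Online control protocol: at each step $t$ the algorithm observes $x_t$, chooses $u_t\in\mathbb{R}$, then the cost $c_t(x_t,u_t)$ is incurred and the state evolves by the stated dynamics. *)

(* Defs.v *)
From HB Require Import structures.
From mathcomp Require Import all_boot all_order all_algebra.
From mathcomp Require Import reals.
Set Implicit Arguments. Unset Strict Implicit. Unset Printing Implicit Defensive.
Import Order.TTheory GRing.Theory Num.Theory.
Local Open Scope ring_scope.

Definition pert (R : realType) (T : nat) (b : bool) (t : nat) : R :=
  if b && (t == T./2)%N then -1 else 0.

Definition cost (R : realType) (T : nat) (t : nat) (x u : R) : R :=
  if (T./2 < t)%N then `|x| + `|u| else 0.

Definition is_traj (R : realType) (beta : R) (T : nat) (b : bool)
    (x u : nat -> R) : Prop :=
  x 1%N = 1 /\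
  forall t : nat, (1 <= t)%N -> (t < T)%N ->
    x t.+1 = x t - beta / T%:R * u t + pert R T b t.

(* Main.v *)
Require Import Defs.
From HB Require Import structures.
From mathcomp Require Import all_boot all_order all_algebra.
From mathcomp Require Import reals.
From mathcomp Require Import ring lra.
Import Order.TTheory GRing.Theory Num.Theory.
Local Open Scope ring_scope.

Lemma key (R : realType) (c : R) (y v : nat -> R) (n : nat) : 0 <= c ->
  forall s (L : R),
  (forall j, 0 <= y j) -> (forall j, 0 <= v j) ->
  (forall j, (s <= j)%N -> (j.+1 < s + n)%N -> y j - c * v j <= y j.+1) ->
  0 <= L -> L <= n%:R -> c * L <= 1 ->
  L * y s <= \sum_(s <= t < s + n) (y t + v t).
Proof.
move=> c0; elim: n => [|n IH] s L y0 v0 H L0 Ln cL.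
  have -> : L = 0 by apply/eqP; rewrite eq_le L0 Ln.
  by rewrite mul0r addn0 big_geq.
rewrite addnS big_ltn ?ltnS ?leq_addr //.
have S0 : 0 <= \sum_(s.+1 <= t < (s + n).+1) (y t + v t).
  by apply: sumr_ge0 => i _; apply: addr_ge0.
have [L1|L1] := leP L 1.
  have := y0 s; have := v0 s.
  move=> a b; have : L * y s <= y s by rewrite ler_piMl.
  by move=> e; lra.
case: n IH H Ln S0 => [|n] IH H Ln S0.
  by move: Ln; rewrite /= ?mulr1n; lra.
have := IH s.+1 (L - 1) y0 v0.
have h1 : L - 1 <= n.+1%:R by move: Ln; rewrite -[n.+2%:R]natr1; lra.
have h2 : c * (L - 1) <= 1 by rewrite mulrBr mulr1; nra.
have h3 : 0 <= L - 1 by lra.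
have hj : forall j, (s.+1 <= j)%N -> (j.+1 < s.+1 + n.+1)%N -> y j - c * v j <= y j.+1.
  move=> j hj1 hj2; apply: H; first exact: ltnW.
  by rewrite -addSnnS.
have hs : y s - c * v s <= y s.+1.
  by apply: H => //; rewrite addnS ltnS addnS ltnS leq_addr.
move=> /(_ hj h3 h1 h2); rewrite addSn => IH2.
have hm : (L - 1) * (y s - c * v s) <= (L - 1) * y s.+1 by rewrite ler_wpM2l.
have := v0 s; have := y0 s; nra.
Qed.

Theorem lemma11 (R : realType) (beta : R) (T : nat) (b : bool) (x u : nat -> R) :
  2 <= beta -> beta <= T%:R -> ~~ odd T ->
  is_traj beta T b x u ->
  \sum_(1 <= t < T.+1) cost T t (x t) (u t)
    = \sum_((T./2).+1 <= t < T.+1) (`|x t| + `|u t|) /\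
  \sum_((T./2).+1 <= t < T.+1) (`|x t| + `|u t|)
    >= T%:R / (2 * beta) * `|x (T./2).+1|.
Proof.
move=> b2 bT ev [x1 Hx].
set m := T./2.
have Tm : T = (m + m)%N by rewrite -[LHS](even_halfK ev) -addnn.
have Tpos : 0 < T%:R :> R by lra.
split.
  rewrite (@big_cat_nat _ _ _ m.+1) //=; last by rewrite ltnS Tm leq_addr.
  rewrite big_nat_cond big1 ?add0r; last first.
    by move=> i /andP[/andP[_ hi] _]; rewrite /cost ltnNge -ltnS hi.
  by apply: eq_big_nat => i /andP[hi _]; rewrite /cost hi.
have -> : T.+1 = (m.+1 + m)%N by rewrite Tm addSn.
apply: (@key R (beta / T%:R) (fun t => `|x t|) (fun t => `|u t|) m).
- by apply: divr_ge0; lra.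
- by move=> j.
- by move=> j.
- move=> j hj1 hj2.
  have hjT : (j < T)%N by rewrite Tm -ltnS -addSn.
  have hj0 : (1 <= j)%N by apply: leq_trans hj1; rewrite ltnS.
  rewrite Hx //.
  rewrite /pert.
  have -> : (j == m) = false by apply/negbTE; rewrite neq_ltn hj1 orbT.
  rewrite andbF addr0.
  have := lerB_dist (x j) (beta / T%:R * u j).
  rewrite normrM ger0_norm //; apply: divr_ge0; lra.
- apply: divr_ge0; lra.
- have hm : T%:R = 2 * m%:R :> R by rewrite Tm natrD; lra.
  rewrite ler_pdivrMr; last lra.
  rewrite hm; nra.
- have -> : beta / T%:R * (T%:R / (2 * beta)) = 1 / 2.
    field; apply/andP; split; apply/negP => /eqP; lra.
  lra.
Qed.
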